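(* Let $k$ be a field, $R=k[x_1,\ldots,x_n]$ with $n\ge2$, and let $I$ be an almost reverse lexicographic ideal whose last generator is $x_{n-1}^t$ for some $t>0$ (so $f_{n-1}(0)=t$). Let \[T=\{(\alpha_1,\ldots,\alpha_{n-2},\beta)\in\mathbb{Z}^{n-1}_{\ge0}: \alpha=(\alpha_1,\ldots,\alpha_{n-2})\in\mathcal{I}_{n-2},\ 0\le\beta<f_{n-1}(\alpha)\}.\] Let $s$ be a positive integer with $s\le|T|$, and let $A_1>A_2>\cdots>A_s$ be the $s$ largest elements of $T$ (so $A_s>B$ for every $B\in T\setminus\{A_1,\ldots,A_s\}$). Let $g:\{A_1,\ldots,A_s\}\to\mathbb{Z}_{>0}$ satisfy $t\le|A_i|+g(A_i)\le|A_j|+g(A_j)$ whenever $A_i>A_j$. Let $J$ be the ideal generated by $\mathcal{S}=\mathcal{G}(I)\cup\{x^{A_i}x_n^{g(A_i)}:1\le i\le s\}$. Then $J$ is almost reverse lexicographic and $\mathcal{G}(J)=\mathcal{S}$.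
   Context: Degree reverse lexicographic order: for $M=x^\alpha,N=x^\beta$, $M>N$ iff $\deg M>\deg N$, or degrees are equal and for the largest $s$ with $\alpha_s\neq\beta_s$ one has $\alpha_s<\beta_s$. For $\alpha\in\mathbb{Z}^s_{\ge0}$, $x^\alpha=x_1^{\alpha_1}\cdots x_s^{\alpha_s}$, $|\alpha|=\sum\alpha_j$, and $\alpha\le\beta$ iff $x^\alpha\le x^\beta$. Almost reverse lexicographic: for every monomial $M$ and every minimal monomial generator $N$ of $I$ with $\deg M=\deg N$ and $M>N$, $M\in I$. $\mathcal{G}(I)$ is the minimal monomial generating set. The last generator of $I$ is the element of $\mathcal{G}(I)$ of maximal degree that is smallest in the order among elements of $\mathcal{G}(I)$ of that degree. $f_1=\min\{t:x_1^t\in I\}$; for $i\ge2$, $\alpha\in\mathbb{Z}^{i-1}_{\ge0}$, $f_i(\alpha)=\min\{t\ge0:x^\alpha x_i^t\in I\}$. $\mathcal{I}_{n-2}=\{(\alpha_1,\ldots,\alpha_{n-2})\in\mathbb{Z}^{n-2}_{\ge0}: 0\le\alpha_1<f_1,\ 0\le\alpha_j<f_j(\alpha_1,\ldots,\alpha_{j-1})\ (2\le j\le n-2)\}$; for $n=2$ it consists of the empty tuple and $f_1$ of the empty tuple is $f_1$. *)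

(* Defs.v *)
(* Monomial ideals of k[x_1,...,x_n] are modelled by their
   sets of exponent vectors (up-sets of N^n for componentwise order). *)
From mathcomp Require Import all_boot.
Set Implicit Arguments. Unset Strict Implicit. Unset Printing Implicit Defensive.

(* exponent vector of a monomial in n variables; index i : 'I_n is x_(i+1) *)
Notation mon n := {ffun 'I_n -> nat}.

Definition mdeg {n} (a : mon n) : nat := \sum_(i < n) a i.

Definition mdiv {n} (a b : mon n) : Prop := forall i, a i <= b i.

Definition mono_ideal {n} (I : mon n -> Prop) : Prop :=
  forall a b, I a -> mdiv a b -> I b.

Definition gen_ideal {n} (S : mon n -> Prop) : mon n -> Prop :=
  fun b => exists a, S a /\ mdiv a b.

Definition mingen {n} (I : mon n -> Prop) (a : mon n) : Prop :=
  I a /\ forall b, I b -> mdiv b a -> b = a.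

(* degree reverse lexicographic order: drl_lt b a  means  x^b < x^a *)
Definition drl_lt {n} (b a : mon n) : Prop :=
  mdeg b < mdeg a \/
  (mdeg b = mdeg a /\
   exists j : 'I_n, a j < b j /\ forall k : 'I_n, j < k -> a k = b k).

Definition drl_le {n} (b a : mon n) : Prop := b = a \/ drl_lt b a.

Definition almost_revlex {n} (I : mon n -> Prop) : Prop :=
  forall M N, mingen I N -> mdeg M = mdeg N -> drl_lt N M -> I M.

Definition last_gen {n} (I : mon n -> Prop) (L : mon n) : Prop :=
  mingen I L /\
  (forall N, mingen I N -> mdeg N <= mdeg L) /\
  (forall N, mingen I N -> mdeg N = mdeg L -> drl_le L N).

Definition xpow {n} (i : 'I_n) (t : nat) : mon n :=
  [ffun j => if j == i then t else 0].

(* k-th coordinate (0-based), 0 if out of range *)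
Definition mcoef {n} (a : mon n) (k : nat) : nat :=
  match (insub k : option 'I_n) with Some i => a i | None => 0 end.

(* x^(alpha_0..alpha_(j-1)) * x_(j+1)^u  (0-based j) *)
Definition pmon {n} (alpha : nat -> nat) (j : nat) (u : nat) : mon n :=
  [ffun k : 'I_n => if val k < j then alpha (val k)
                    else if val k == j then u else 0].

Definition is_min (P : nat -> Prop) (v : nat) : Prop :=
  P v /\ forall u, P u -> v <= u.

(* f_(j+1)(alpha_0..alpha_(j-1)) = v  (0-based j) *)
Definition f_val {n} (I : mon n -> Prop) (alpha : nat -> nat) (j : nat) (v : nat) : Prop :=
  is_min (fun u => I (pmon alpha j u)) v.

(* membership in T for n = m.+2 variables: B = (alpha_1..alpha_(n-2), beta)
   with alpha in I_(n-2) and beta < f_(n-1)(alpha); uniformly: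
   B_j < f_(j+1)(B_1..B_(j-1)) for all j = 1..n-1 *)
Definition inT {m} (I : mon m.+2 -> Prop) (B : mon m.+1) : Prop :=
  forall j : 'I_m.+1, exists v, f_val I (mcoef B) (val j) v /\ B j < v.

Definition ext_mon {m} (B : mon m.+1) (g : nat) : mon m.+2 :=
  [ffun k : 'I_m.+2 => if val k < m.+1 then mcoef B (val k) else g].

(* Main.v *)
Require Import Defs.
From mathcomp Require Import all_boot zify.
From Stdlib Require Import Classical.

Module Helpers.
Set Implicit Arguments. Unset Strict Implicit. Unset Printing Implicit Defensive.

Lemma mcoef_ord n (B : mon n) (k : 'I_n) : mcoef B k = B k.
Proof.
rewrite /mcoef; case: insubP => [k' _ hk|]; last by rewrite ltn_ord.
by congr (B _); apply: val_inj.
Qed.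

Lemma mdiv_refl n (a : mon n) : mdiv a a.
Proof. by move=> i. Qed.

Lemma mdiv_trans n (a b c : mon n) : mdiv a b -> mdiv b c -> mdiv a c.
Proof. by move=> h1 h2 i; apply: leq_trans (h1 i) (h2 i). Qed.

Lemma mdiv_anti n (a b : mon n) : mdiv a b -> mdiv b a -> a = b.
Proof. by move=> h1 h2; apply/ffunP => i; apply/eqP; rewrite eqn_leq h1 h2. Qed.

Lemma mdeg_le n (a b : mon n) : mdiv a b -> mdeg a <= mdeg b.
Proof. by move=> h; apply: leq_sum => i _. Qed.

Lemma mdiv_eq n (a b : mon n) : mdiv a b -> mdeg b <= mdeg a -> a = b.
Proof.
move=> h hd; apply/ffunP => i; apply/eqP; rewrite eqn_leq h /= leqNgt; apply/negP => hlt.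
have : mdeg a < mdeg b.
  rewrite /mdeg (bigD1 i) //= [X in _ < X](bigD1 i) //=.
  rewrite -addSn leq_add //; apply: leq_sum => j _; exact: h.
by rewrite ltnNge hd.
Qed.

Lemma drl_irr n (a : mon n) : ~ drl_lt a a.
Proof. by case=> [h|[_ [j [h _]]]]; rewrite ltnn in h. Qed.

Lemma drl_trans n (a b c : mon n) : drl_lt a b -> drl_lt b c -> drl_lt a c.
Proof.
case=> [h1|[e1 [j [hj1 hk1]]]] [h2|[e2 [j' [hj2 hk2]]]].
- by left; apply: ltn_trans h1 h2.
- by left; rewrite -e2.
- by left; rewrite e1.
- right; split; first by rewrite e1.
  case: (ltngtP j j') => hjj.
  + exists j'; split; first by rewrite -(hk1 _ hjj).
    by move=> k hk; rewrite hk2 // hk1 //; apply: ltn_trans hk.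
  + exists j; split; first by rewrite hk2.
    by move=> k hk; rewrite hk2 ?hk1 //; apply: ltn_trans hk.
  + have e : j' = j by apply: val_inj.
    subst j'; exists j; split; first exact: ltn_trans hj2 hj1.
    by move=> k hk; rewrite hk2 ?hk1.
Qed.

Lemma mdiv_not_lt n (a b : mon n) : mdiv a b -> ~ drl_lt b a.
Proof.
move=> h; case=> [hd|[e [j [hj _]]]].
  by move: (mdeg_le h); rewrite leqNgt hd.
have ab := mdiv_eq h (eq_leq e).
by move: hj; rewrite ab ltnn.
Qed.

Lemma min_ex (P : nat -> Prop) n : P n -> exists v, is_min P v.
Proof.
elim/ltn_ind: n => n IH Pn.
case: (classic (exists u, u < n /\ P u)) => [[u [hu Pu]]|hno].
  exact: IH hu Pu.
exists n; split => // u Pu; rewrite leqNgt; apply/negP => hu.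
by apply: hno; exists u.
Qed.

Lemma exists_mingen n (I : mon n -> Prop) M : I M -> exists a, mingen I a /\ mdiv a M.
Proof.
move: {2}(mdeg M) (leqnn (mdeg M)) => d; elim: d M => [|d IH] M hd IM.
  exists M; split; last exact: mdiv_refl.
  split=> // b _ hb; apply: mdiv_eq hb _; by rewrite (leq_trans hd).
case: (classic (mingen I M)) => hM; first by exists M; split=> //; exact: mdiv_refl.
have [b [Ib [hb nb]]] : exists b, I b /\ mdiv b M /\ b <> M.
  apply: NNPP => hne; apply: hM; split=> // b Ib hb.
  apply: NNPP => nb; apply: hne; by exists b.
have hlt : mdeg b < mdeg M.
  rewrite ltnNge; apply/negP => h; exact: nb (mdiv_eq hb h).
have [a [ma ha]] := IH b (ltnSE (leq_trans hlt hd)) Ib.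
exists a; split=> //; exact: mdiv_trans ha hb.
Qed.

Definition restr m (M : mon m.+2) : mon m.+1 :=
  [ffun k : 'I_m.+1 => M (widen_ord (leqnSn _) k)].

Lemma mdeg_split m (M : mon m.+2) : mdeg M = mdeg (restr M) + M ord_max.
Proof. by rewrite /mdeg big_ord_recr /=; congr (_ + _); apply: eq_bigr => i _; rewrite ffunE. Qed.

Lemma ext_widen m (B : mon m.+1) g k : ext_mon B g (widen_ord (leqnSn _) k) = B k.
Proof. by rewrite ffunE /= ltn_ord mcoef_ord. Qed.

Lemma ext_max m (B : mon m.+1) g : ext_mon B g ord_max = g.
Proof. by rewrite ffunE /= ltnn. Qed.

Lemma mdeg_ext m (B : mon m.+1) g : mdeg (ext_mon B g) = mdeg B + g.
Proof.
rewrite mdeg_split ext_max; congr (_ + _); apply: eq_bigr => i _.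
by rewrite ffunE ext_widen.
Qed.

Lemma restr_ext m (B : mon m.+1) g : restr (ext_mon B g) = B.
Proof. by apply/ffunP => k; rewrite ffunE ext_widen. Qed.

Lemma mdeg_xpow n (i : 'I_n) d : mdeg (xpow i d) = d.
Proof.
rewrite /mdeg (bigD1 i) //= ffunE eqxx big1 ?addn0 // => j /negbTE hj.
by rewrite ffunE hj.
Qed.

Lemma xpowE n (i k : 'I_n) d : xpow i d k = if (k : nat) == (i : nat) then d else 0.
Proof. by rewrite ffunE. Qed.

Lemma pmon_ext m (B : mon m.+1) j u :
  j < m.+1 -> u <= mcoef B j -> mdiv (pmon (mcoef B) j u) (ext_mon B 0).
Proof.
move=> hj hu k; rewrite !ffunE; case: ifP => h1.
  by rewrite (ltn_trans h1 hj).
case: ifP => h2 //; move/eqP: h2 => h2; rewrite h2 hj; exact hu.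
Qed.

Lemma pmon_eq m (B : mon m.+1) :
  pmon (mcoef B) m (mcoef B m) = ext_mon B 0.
Proof.
apply/ffunP => k; rewrite !ffunE; case: ifP => h1.
  by rewrite (ltn_trans h1 (ltnSn m)).
case: ifP => h2; first by move/eqP: h2 => ->; rewrite ltnSn.
have -> : (k < m.+1) = false; last by [].
apply/negbTE; rewrite -leqNgt ltn_neqAle eq_sym h2 /=; by rewrite leqNgt h1.
Qed.

Lemma ext_lo m (B : mon m.+1) g (k : 'I_m.+2) (h : k < m.+1) : ext_mon B g k = B (Ordinal h).
Proof. rewrite ffunE h; exact: (mcoef_ord B (Ordinal h)). Qed.

Lemma ext_hi m (B : mon m.+1) g (k : 'I_m.+2) : m.+1 <= k -> ext_mon B g k = g.
Proof. by move=> h; rewrite ffunE ltnNge h. Qed.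

Lemma restr_at m (M : mon m.+2) (k : 'I_m.+2) (h : k < m.+1) : restr M (Ordinal h) = M k.
Proof. by rewrite ffunE; congr (M _); apply: val_inj. Qed.

Lemma ord_hi m (k : 'I_m.+2) : m.+1 <= k -> k = ord_max.
Proof. move=> h; apply: val_inj => /=; apply/eqP; rewrite eqn_leq h andbT -ltnS; exact: ltn_ord. Qed.

Lemma gens_no_last m (I : mon m.+2 -> Prop) t :
  almost_revlex I -> last_gen I (xpow (inord m) t) ->
  forall a, mingen I a -> a ord_max = 0.
Proof.
move=> ar [mL [hdeg hlast]] a ma; apply/eqP; rewrite -leqn0 leqNgt; apply/negP => hpos.
have vm : (inord m : 'I_m.+2) = m :> nat by rewrite inordK.
have Lmax : xpow (inord m : 'I_m.+2) t ord_max = 0 by rewrite xpowE vm /= (gtn_eqF (ltnSn m)).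
have := hdeg a ma; rewrite mdeg_xpow leq_eqVlt => /orP [/eqP ea | lt].
- case: (hlast a ma); first by rewrite mdeg_xpow.
    by move=> eL; move: hpos; rewrite -eL Lmax.
  case=> [|[_ [j [hj hk]]]]; first by rewrite ea mdeg_xpow ltnn.
  case: (ltnP j m.+1) => hjm.
    by move: hpos; rewrite (hk ord_max hjm) Lmax.
  by move: hj; rewrite xpowE vm (gtn_eqF hjm).
- have IP : I (xpow (inord m : 'I_m.+2) (mdeg a)).
    apply: (ar _ _ ma); first by rewrite mdeg_xpow.
    right; split; first by rewrite mdeg_xpow.
    exists ord_max; split; first by rewrite xpowE vm /= (gtn_eqF (ltnSn m)).
    by move=> k; rewrite ltnNge -ltnS ltn_ord.
  have hd : mdiv (xpow (inord m : 'I_m.+2) (mdeg a)) (xpow (inord m) t).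
    by move=> k; rewrite !xpowE; case: ifP => // _; exact: ltnW lt.
  have e := mL.2 _ IP hd.
  have := congr1 (fun f : mon m.+2 => f (inord m)) e; rewrite /= !xpowE eqxx => e'.
  by move: lt; rewrite e' ltnn.
Qed.

Lemma inT_notin m (I : mon m.+2 -> Prop) (B : mon m.+1) : inT I B -> ~ I (ext_mon B 0).
Proof.
move=> hT IB; have [v [[_ hmin] hv]] := hT ord_max.
have h : v <= mcoef B m by apply: hmin; rewrite /= pmon_eq.
move: hv; rewrite -(mcoef_ord B ord_max) /= => hv.
by move: (leq_ltn_trans h hv); rewrite ltnn.
Qed.

Lemma notin_inT m (I : mon m.+2 -> Prop) t (B : mon m.+1) :
  mono_ideal I -> almost_revlex I -> 0 < t -> last_gen I (xpow (inord m) t) ->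
  ~ I (ext_mon B 0) -> inT I B.
Proof.
move=> mono ar tpos [mL _] nI j.
set k0 := widen_ord (leqnSn m.+1) j.
have vm : (inord m : 'I_m.+2) = m :> nat by rewrite inordK.
have Ix : I (xpow k0 t).
  case: (eqVneq (j : nat) m) => hj.
    have -> : k0 = inord m by apply: val_inj; rewrite /= vm hj.
    exact: mL.1.
  apply: (ar _ _ mL); first by rewrite !mdeg_xpow.
  right; split; first by rewrite !mdeg_xpow.
  exists (inord m); split.
    by rewrite !xpowE vm eqxx /= eq_sym (negbTE hj).
  move=> k; rewrite vm => hk; rewrite !xpowE vm /= (gtn_eqF hk).
  by rewrite (gtn_eqF (leq_ltn_trans (ltnSE (ltn_ord j)) hk)).
have Ip : I (pmon (mcoef B) j t).
  apply: (mono _ _ Ix) => k; rewrite xpowE ffunE /=.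
  idtac.
  by case: eqP => [e|] //; rewrite e ltnn.
have [v hv] := @min_ex (fun u => I (pmon (mcoef B) j u)) t Ip.
exists v; split => //; rewrite ltnNge; apply/negP => hle.
apply: nI; apply: (mono _ _ hv.1); apply: pmon_ext => //.
by rewrite mcoef_ord.
Qed.
End Helpers.
Import Helpers.

Theorem lemma3p7 (m : nat) (I : mon m.+2 -> Prop) (t : nat)
  (s : nat) (A : 'I_s -> mon m.+1) (g : 'I_s -> nat) :
  mono_ideal I ->
  almost_revlex I ->
  0 < t ->
  last_gen I (xpow (inord m : 'I_m.+2) t) ->
  0 < s ->
  (forall i, inT I (A i)) ->
  (forall i j : 'I_s, (i < j)%N -> drl_lt (A j) (A i)) ->
  (forall B, inT I B -> (forall i, B <> A i) ->
     forall i : 'I_s, val i = s.-1 -> drl_lt B (A i)) ->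
  (forall i, 0 < g i) ->
  (forall i j : 'I_s, drl_lt (A j) (A i) ->
     t <= mdeg (A i) + g i <= mdeg (A j) + g j) ->
  let S := fun M => mingen I M \/ exists i, M = ext_mon (A i) (g i) in
  let J := gen_ideal S in
  almost_revlex J /\ (forall M, mingen J M <-> S M).
Proof.
move=> mono ar tpos hlast spos hT hord hlastA gpos hg S J.
have F1 := gens_no_last ar hlast.
have IJ : forall M, I M -> J M.
  move=> M IM; have [a [ma ha]] := exists_mingen IM.
  by exists a; split => //; left.
have anti : forall c a, S c -> S a -> mdiv c a -> c = a.
  move=> c a [mc|[j ->]] [ma|[i ->]] hd.
  - exact: ma.2 _ mc.1 hd.
  - exfalso; apply: (inT_notin (hT i)); apply: (mono _ _ mc.1) => k.
    move: (hd k); case: (ltnP k m.+1) => hk.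
      by rewrite !(ext_lo _ _ hk).
    by rewrite (ord_hi hk) F1.
  - exfalso; move: (hd ord_max); rewrite ext_max (F1 _ ma) leqn0 => /eqP e.
    by move: (gpos j); rewrite e.
  - have hA : mdiv (A j) (A i).
      by move=> k; move: (hd (widen_ord (leqnSn _) k)); rewrite !ext_widen.
    have hgg : g j <= g i by move: (hd ord_max); rewrite !ext_max.
    case: (ltngtP i j) => hij.
    + have hlt := hord i j hij.
      have /andP [_ h2] := hg _ _ hlt.
      have h3 := mdeg_le hA.
      have e := mdiv_eq hA (_ : mdeg (A i) <= mdeg (A j)).
      by exfalso; move: hlt; rewrite e; first apply: drl_irr; lia.
    + by exfalso; apply: (mdiv_not_lt hA); apply: hord.
    + by rewrite (_ : i = j) //; apply: val_inj.
have eqv : forall M, mingen J M <-> S M.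
  move=> M; split.
    move=> [[c [Sc hc]] hmin].
    have e := hmin c (ex_intro _ c (conj Sc (mdiv_refl c))) hc.
    by rewrite -e.
  move=> SM; split; first by exists M; split => //; exact: mdiv_refl.
  move=> b [c [Sc hc]] hb.
  have e := anti _ _ Sc SM (mdiv_trans hc hb).
  apply: mdiv_anti => //; by rewrite -e.
split=> //.
move=> M N mN eM hlt.
case: ((eqv N).1 mN) => [mN'|[i eN]].
  by apply: IJ; exact: ar M N mN' eM hlt.
subst N.
set mu := restr M.
have dM : mdeg M = mdeg mu + M ord_max := mdeg_split M.
rewrite mdeg_ext in eM.
have hmu : drl_lt (A i) mu.
  case: hlt => [hd|[_ [j [hj hk]]]].
    by exfalso; move: hd; rewrite mdeg_ext eM ltnn.
  case: (ltnP j m.+1) => hjm.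
  - have ec := hk ord_max hjm; rewrite ext_max in ec.
    right; split; first by lia.
    exists (Ordinal hjm); split.
      by rewrite restr_at -(ext_lo (A i) (g i) hjm).
    move=> k hk'; rewrite ffunE -(ext_widen (A i) (g i) k); apply: hk.
    exact: hk'.
  - move: hj; rewrite (ord_hi hjm) ext_max => hj.
    left; lia.
case: (classic (I (ext_mon mu 0))) => hI.
  apply: IJ; apply: (mono _ _ hI) => k.
  case: (ltnP k m.+1) => hk.
    by rewrite (ext_lo _ _ hk) restr_at.
  by rewrite ext_hi.
have muT : inT I mu := notin_inT mono ar tpos hlast hI.
case: (classic (exists k, mu = A k)) => [[k ek]|nk].
  case: (ltngtP k i) => hki.
  - have /andP [_ h2] := hg _ _ (hord _ _ hki).
    have hc : g k <= M ord_max by rewrite -/mu ek in dM; lia.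
    exists (ext_mon (A k) (g k)); split; first by right; exists k.
    move=> l; case: (ltnP l m.+1) => hl.
      by rewrite (ext_lo _ _ hl) -ek restr_at.
    by rewrite ext_hi // (ord_hi hl).
  - exfalso; apply: (@drl_irr _ (A k)).
    by apply: drl_trans (hord _ _ hki) _; rewrite -ek.
  - have e : k = i by apply: val_inj.
    by exfalso; apply: (@drl_irr _ (A i)); rewrite -{2}e -ek.
have ls : s.-1 < s by case: (s) spos.
set last := Ordinal ls.
have hl := hlastA mu muT (fun k e => nk (ex_intro _ k e)) last erefl.
exfalso; apply: (@drl_irr _ (A i)).
have := drl_trans hmu hl.
case: (ltnP i s.-1) => his.
  by move=> h; apply: drl_trans h (hord i last his).
have -> : last = i.
  apply: val_inj => /=; apply/eqP; rewrite eqn_leq his /=.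
  by rewrite -ltnS (ltn_predK spos) ltn_ord.
by [].
Qed.
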